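(* $\mathcal{A}_h^{2h}$ is the operator adjoint of $\mathcal{I}_{2h}^{h}$ and is proportional to the left inverse of $\mathcal{I}_{2h}^{h}$: for any $\bm v_h\in\mathbb{R}^{|S_h|}$ and $\bm v_{2h}\in\mathbb{R}^{|S_{2h}|}$, \[ \big(\bm v_h, \mathcal{I}_{2h}^{h}\bm v_{2h}\big)=\big(\mathcal{A}_h^{2h}\bm v_h, \bm v_{2h}\big),\qquad \mathcal{A}_h^{2h}\mathcal{I}_{2h}^{h}\bm v_{2h}=2^d\,\bm v_{2h}, \] where the parentheses denote standard inner products. Furthermore, the stochastic matrices at consecutive levels satisfy \[ P_{2h}=\mathcal{A}_h^{2h}\,P_h\,\mathcal{I}_{2h}^{h}. \]
   Context: Partition $\mathcal{D}=[-1,1]^d$ with uniform spacing $h=1/N$ into bins $\mathcal{D}_{\bm j}(h)=\bigotimes_{k=1}^d[j_kh,(j_k+1)h)$, $\bm j\in N(h)=\{\bm j:-N\le j_k<N\ \forall k\}$, giving a finite state space $S_h$ with $|S_h|=(2/h)^d$; each bin of level $2h$ is the union of $2^d$ bins of level $h$. For a transition density $K(x,y)$ on $\mathbb{R}^d$, the Ulam–Galerkin matrix at level $h$ is $P_h(\bm i,\bm j)=\int_{\mathcal{D}_{\bm i}(h)}\int_{\mathcal{D}_{\bm j}(h)}K(x,y)\,dy\,dx$. The averaging operator $\mathcal{A}_h^{2h}$ maps a vector on level $h$ to level $2h$ by summing the entries of the $2^d$ fine bins contained in each coarse bin; the interpolation operator $\mathcal{I}_{2h}^{h}$ maps a vector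 on level $2h$ to level $h$ by assigning each fine bin the value of the coarse bin containing it. *)

(* Defs.v *)
From HB Require Import structures.
From mathcomp Require Import all_boot all_order all_algebra.
From mathcomp Require Import all_classical all_reals all_analysis.
Set Implicit Arguments. Unset Strict Implicit. Unset Printing Implicit Defensive.
Import Order.TTheory GRing.Theory Num.Theory.
Local Open Scope classical_set_scope.
Local Open Scope ring_scope.

(* Level with spacing h = 1/N on D = [-1,1]^d.  A multi-index
   j in N(h) = {j : -N <= j_k < N} is encoded by k = j + N, i.e. by
   a function 'I_d -> 'I_(2N).  So S_h = state N, |S_h| = (2N)^d = (2/h)^d. *)
Definition state (d N : nat) := {ffun 'I_d -> 'I_(N.*2)}.

Definition jidx (d N : nat) (j : state d N) (k : 'I_d) : int :=
  (j k)%:Z - N%:Z.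

Definition bin (R : realType) (d N : nat) (j : state d N) : set (d.-tuple R) :=
  [set x | forall k : 'I_d,
     (jidx j k)%:~R / N%:R <= tnth x k /\ tnth x k < (jidx j k + 1)%:~R / N%:R].

(* fine bin k (level h = 1/(2M)) is contained in coarse bin c (level 2h = 1/M):
   floor(j_k/2) = i_k, i.e. (k_k)/2 = c_k in the shifted encodings *)
Definition in_coarse (d M : nat) (k : state d M.*2) (c : state d M) : bool :=
  [forall i, (k i)./2 == (c i : nat)].

Definition inner (R : nzRingType) (S : finType) (u v : S -> R) : R :=
  \sum_(s : S) u s * v s.

Definition avg (R : nzRingType) (d M : nat) (v : state d M.*2 -> R) :
  state d M -> R :=
  fun c => \sum_(k : state d M.*2 | in_coarse k c) v k.

Definition interp (R : nzRingType) (d M : nat) (w : state d M -> R) :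
  state d M.*2 -> R :=
  fun k => \sum_(c : state d M | in_coarse k c) w c.

Definition avg_mx (R : nzRingType) (d M : nat) (c : state d M) (k : state d M.*2)
  : R := (in_coarse k c)%:R.
Definition interp_mx (R : nzRingType) (d M : nat) (k : state d M.*2)
  (c : state d M) : R := (in_coarse k c)%:R.

(* mu is the Lebesgue measure on R^d: the product of lengths on boxes
   (this characterizes Lebesgue measure on the Borel sets of R^d) *)
Definition is_lebesgue (R : realType) (d : nat)
  (mu : {measure set (d.-tuple R) -> \bar R}) : Prop :=
  forall a b : d.-tuple R, (forall k, tnth a k <= tnth b k) ->
    mu [set x | forall k, tnth a k <= tnth x k /\ tnth x k < tnth b k]
    = (\prod_(k < d) (tnth b k - tnth a k))%:E.

Definition transition_density (R : realType) (d : nat)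
  (mu : {measure set (d.-tuple R) -> \bar R})
  (K : d.-tuple R -> d.-tuple R -> R) : Prop :=
  [/\ forall x y, 0 <= K x y,
      measurable_fun setT (fun p : d.-tuple R * d.-tuple R => K p.1 p.2)
    & forall x, (\int[mu]_y (K x y)%:E = 1)%E].

(* Ulam-Galerkin matrix at level h = 1/N:
   P_h(i,j) = int_{D_i(h)} int_{D_j(h)} K(x,y) dy dx  (a finite nonnegative
   number for a transition density, hence [fine] is harmless) *)
Definition ulam (R : realType) (d : nat)
  (mu : {measure set (d.-tuple R) -> \bar R})
  (K : d.-tuple R -> d.-tuple R -> R) (N : nat) (i j : state d N) : R :=
  fine (\int[mu]_(x in @bin R d N i) \int[mu]_(y in @bin R d N j) (K x y)%:E)%E.

(* Main.v *)
Require Import Defs.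
From HB Require Import structures.
From mathcomp Require Import all_boot all_order all_algebra.
From mathcomp Require Import all_classical all_reals all_analysis measurable_realfun.
From mathcomp Require Import zify ring lra.
Set Implicit Arguments. Unset Strict Implicit.
Import Order.TTheory GRing.Theory Num.Theory.
Local Open Scope ring_scope.
Local Open Scope ring_scope.

Lemma mk_lt (M : nat) (c : 'I_(M.*2)) (b : bool) : (c.*2 + b < M.*2.*2)%N.
Proof. have := ltn_ord c; case: b => /=; lia. Qed.

Definition mkfine (d M : nat) (c : state d M) (b : {ffun 'I_d -> bool}) : state d M.*2 :=
  [ffun i => Ordinal (@mk_lt M (c i) (b i))].

Lemma in_coarse_mkfine d M (c : state d M) b : in_coarse (mkfine c b) c.
Proof. apply/forallP => i; rewrite /mkfine ffunE /=; apply/eqP; case: (b i) => /=; lia. Qed.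

Lemma in_coarse_uniq d M (k : state d M.*2) c c' :
  in_coarse k c -> in_coarse k c' -> c = c'.
Proof.
move=> /forallP h /forallP h'; apply/ffunP => i; apply/val_inj.
have e1 := eqP (h i); have e2 := eqP (h' i); rewrite /= -e1 -e2 //.
Qed.

Lemma in_coarseP d M (k : state d M.*2) c :
  in_coarse k c -> exists b, k = mkfine c b.
Proof.
move=> /forallP h; exists [ffun i => odd (k i)]; apply/ffunP => i; apply/val_inj.
rewrite /mkfine !ffunE /= -(eqP (h i)).
by rewrite -{1}(odd_double_half (k i)) addnC.
Qed.

Lemma mkfine_inj d M (c : state d M) : injective (mkfine c).
Proof.
move=> b b' /ffunP h; apply/ffunP => i; have := f_equal val (h i).
rewrite /mkfine !ffunE /=; case: (b i); case: (b' i) => //=; lia.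
Qed.

Lemma card_coarse d M (c : state d M) :
  #|[pred k : state d M.*2 | in_coarse k c]| = (2 ^ d)%N.
Proof.
have e : [pred k : state d M.*2 | in_coarse k c] =i [set mkfine c b | b in {ffun 'I_d -> bool}].
  move=> k; rewrite inE; apply/idP/idP.
    by move/in_coarseP => [b ->]; apply/imsetP; exists b.
  by move/imsetP => [b _ ->]; exact: in_coarse_mkfine.
rewrite (eq_card e) card_imset; last exact: mkfine_inj.
by rewrite card_ffun card_bool card_ord.
Qed.

Lemma part1 (R : realType) d M (v : state d M.*2 -> R) (w : state d M -> R) :
  inner v (interp w) = inner (avg v) w.
Proof.
rewrite /inner /interp /avg.
under eq_bigr do rewrite mulr_sumr big_mkcond.
under [RHS]eq_bigr do rewrite mulr_suml big_mkcond.
rewrite exchange_big /=; apply: eq_bigr => c _; apply: eq_bigr => k _.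
by case: ifP.
Qed.

Lemma part2 (R : realType) d M (w : state d M -> R) :
  avg (interp w) = (fun c => (2 ^ d)%:R * w c).
Proof.
apply: funext => c; rewrite /avg /interp.
rewrite (eq_bigr (fun _ => w c)); last first.
  move=> k hk; rewrite (big_pred1 c) //= => c'; apply/idP/eqP.
    by move=> h; exact: in_coarse_uniq h hk.
  by move->.
by rewrite sumr_const card_coarse mulr_natl.
Qed.

Local Open Scope ring_scope.
Local Open Scope classical_set_scope.
Local Open Scope ring_scope.

Section geom.
Variable R : realType.

Lemma jidxE d N (j : state d N) k :
  ((jidx j k)%:~R = (j k)%:R - N%:R :> R) /\
  ((jidx j k + 1)%:~R = (j k)%:R - N%:R + 1 :> R).
Proof. by rewrite /jidx !intrD !intrN -!pmulrn. Qed.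

Lemma binP d N (hN : (0 < N)%N) (j : state d N) (x : d.-tuple R) :
  bin j x <-> forall k, (j k)%:R - N%:R <= tnth x k * N%:R /\
                        tnth x k * N%:R < (j k)%:R - N%:R + 1.
Proof.
have N0 : (0 : R) < N%:R by rewrite ltr0n.
rewrite /bin /=; split => h k; have [h1 h2] := jidxE j k; have [l r] := h k.
  by move: l r; rewrite h1 h2 ler_pdivrMr // ltr_pdivlMr.
by rewrite h1 h2 ler_pdivrMr // ltr_pdivlMr.
Qed.

Lemma bin_disj d N (hN : (0 < N)%N) (j j' : state d N) (x : d.-tuple R) :
  bin j x -> bin j' x -> j = j'.
Proof.
move=> /(binP hN) h /(binP hN) h'; apply/ffunP => k; apply/val_inj.
have [a1 a2] := h k; have [b1 b2] := h' k.
have e1 : ((j k)%:R : R) < (j' k)%:R + 1 by lra.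
have e2 : ((j' k)%:R : R) < (j k)%:R + 1 by lra.
move: e1 e2; rewrite !natr1 !ltr_nat !ltnS => p q; by apply/eqP; rewrite eqn_leq p q.
Qed.

Lemma dblR M : ((M.*2)%:R : R) = 2 * M%:R.
Proof. by rewrite -mul2n natrM. Qed.

Lemma bin_fine_coarse d M (hM : (0 < M)%N) (k : state d M.*2) (c : state d M)
  (x : d.-tuple R) : in_coarse k c -> bin k x -> bin c x.
Proof.
move=> /in_coarseP [b ->] /(binP _) h; have hM2 : (0 < M.*2)%N by rewrite double_gt0.
apply/(binP hM) => i; have [h1 h2] := h hM2 i.
move: h1 h2; rewrite /mkfine ffunE /= natrD -mul2n natrM !dblR.
rewrite mulrCA; set t := tnth x i * M%:R.
have hb : (0 : R) <= (b i)%:R /\ (b i)%:R <= (1:R) by case: (b i) => /=; split; lra.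
lra.
Qed.

Lemma bin_coarse_fine d M (hM : (0 < M)%N) (c : state d M) (x : d.-tuple R) :
  bin c x -> exists k : state d M.*2, in_coarse k c /\ bin k x.
Proof.
move=> /(binP hM) h; have hM2 : (0 < M.*2)%N by rewrite double_gt0.
exists (mkfine c [ffun i => ((c i)%:R - M%:R) * 2 + 1 <= tnth x i * M%:R * 2]).
split; first exact: in_coarse_mkfine.
apply/(binP hM2) => i; have [h1 h2] := h i.
rewrite /mkfine !ffunE /= natrD -mul2n natrM !dblR.
move: h1 h2; rewrite mulrCA; set t := tnth x i * M%:R.
have [hc|hc] := lerP (((c i)%:R - M%:R) * 2 + 1) (t * 2); rewrite /= ?mulr1n ?mulr0n => ? ?; split; lra.
Qed.

End geom.

Local Open Scope classical_set_scope.
Local Open Scope ring_scope.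

Definition muS d (T : measurableType d) (R : realType)
  (mu : {measure set T -> \bar R}) (H : sigma_finite setT mu) : set T -> \bar R := mu.
HB.instance Definition _ d (T : measurableType d) (R : realType)
  (mu : {measure set T -> \bar R}) (H : sigma_finite setT mu) :=
  Measure.copy (@muS d T R mu H) mu.
HB.instance Definition _ d (T : measurableType d) (R : realType)
  (mu : {measure set T -> \bar R}) (H : sigma_finite setT mu) :=
  @Measure_isSigmaFinite.Build d T R (@muS d T R mu H) H.

Section meas.
Variable R : realType.
Variable d : nat.

Lemma box_meas (a b : 'I_d -> R) :
  measurable [set x : d.-tuple R | forall k, a k <= tnth x k /\ tnth x k < b k].
Proof.
have -> : [set x : d.-tuple R | forall k, a k <= tnth x k /\ tnth x k < b k] =
  \bigcap_(k in [set: 'I_d]) ((fun x : d.-tuple R => tnth x k) @^-1` [set` `[a k, b k[%R]).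
  apply/seteqP; split => x /=.
    by move=> h k _ /=; rewrite in_itv /=; apply/andP; exact: h.
  by move=> h k; have := h k I; rewrite /= in_itv /= => /andP.
apply: fin_bigcap_measurable; first exact: finite_finset.
move=> k _; rewrite -[X in measurable X]setTI.
by apply: measurable_tnth => //; exact: measurable_itv.
Qed.

Lemma bin_meas N (j : state d N) : measurable (@bin R d N j).
Proof. exact: box_meas. Qed.

Lemma box_fin (mu : {measure set (d.-tuple R) -> \bar R}) (hL : is_lebesgue mu)
  (a b : 'I_d -> R) : (forall k, a k <= b k) ->
  (mu [set x | forall k, (a k <= tnth x k /\ tnth x k < b k)%R] < +oo)%E.
Proof.
move=> ab.
have -> : [set x : d.-tuple R | forall k, a k <= tnth x k /\ tnth x k < b k] =
  [set x | forall k, tnth [tuple a i | i < d] k <= tnth x k /\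
                     tnth x k < tnth [tuple b i | i < d] k].
  by apply/funext => x; apply/propext; split => h k; move: (h k); rewrite !tnth_mktuple.
by rewrite hL ?ltry // => k; rewrite !tnth_mktuple.
Qed.

Lemma leb_sigma (mu : {measure set (d.-tuple R) -> \bar R}) (hL : is_lebesgue mu) :
  sigma_finite setT mu.
Proof.
exists (fun n : nat => [set x : d.-tuple R | forall k, - (n%:R) <= tnth x k /\ tnth x k < n%:R]).
  apply/seteqP; split => x // _.
  set s := \sum_(k < d) `|tnth x k|.
  have s0 : 0 <= s by apply: sumr_ge0.
  exists (Num.Def.archi_bound s) => // k.
  have hs := archi_boundP s0.
  have hk : `|tnth x k| <= s.
    by rewrite /s (bigD1 k) //= lerDl; apply: sumr_ge0.
  have h2 := ler_norm (tnth x k).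
  have h3 : - tnth x k <= `|tnth x k| by rewrite -normrN ler_norm.
  split; lra.
move=> n; split; first exact: box_meas.
by apply: box_fin => // k; have : (0:R) <= n%:R by []; lra.
Qed.

End meas.

Local Open Scope classical_set_scope.
Local Open Scope ring_scope.

Section integ.
Variable R : realType.
Variables d M : nat.
Hypothesis hM : (0 < M)%N.
Variable mu : {measure set (d.-tuple R) -> \bar R}.

Lemma int_sum_fin (D : set (d.-tuple R)) (mD : measurable D) (I : finType) (P : pred I)
  (f : I -> d.-tuple R -> \bar R) :
  (forall i, measurable_fun D (f i)) -> (forall i x, D x -> (0 <= f i x)%E) ->
  (\int[mu]_(x in D) (\sum_(i | P i) f i x) = \sum_(i | P i) \int[mu]_(x in D) f i x)%E.
Proof.
move=> mf f0.
under eq_integral do rewrite -big_filter.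
by rewrite ge0_integral_sum // big_filter.
Qed.

Lemma patch_sum (c : state d M) (f : d.-tuple R -> \bar R) x :
  (f \_ (bin c)) x = \sum_(k | in_coarse k c) (f \_ (@bin R d M.*2 k)) x.
Proof.
have hM2 : (0 < M.*2)%N by rewrite double_gt0.
rewrite {1}/patch; case: ifPn => [/set_mem hx|hx].
  have [k0 [hk0 hx0]] := bin_coarse_fine hM hx.
  rewrite (bigD1 k0) //= big1 ?adde0.
    by rewrite /patch (mem_set hx0).
  move=> k /andP [_ hk]; rewrite /patch ifF //; apply/negP => /set_mem hxk.
  by move/eqP: hk; apply; exact: (@bin_disj R d (M.*2) hM2 _ _ x hxk hx0).
symmetry; apply: big1 => k hk; rewrite /patch ifF //; apply/negP => /set_mem hxk.
by move/negP: hx; apply; apply/mem_set; exact: (@bin_fine_coarse R d M hM k c x hk hxk).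
Qed.

Lemma split_int (c : state d M) (f : d.-tuple R -> \bar R) :
  measurable_fun setT f -> (forall x, (0 <= f x)%E) ->
  (\int[mu]_(x in bin c) f x = \sum_(k | in_coarse k c) \int[mu]_(x in @bin R d M.*2 k) f x)%E.
Proof.
move=> mf f0.
rewrite integral_mkcond.
under eq_integral do rewrite patch_sum.
rewrite int_sum_fin //.
- by apply: eq_bigr => k _; rewrite -integral_mkcond.
- move=> k; apply/(measurable_restrictT _ _).1; first exact: bin_meas.
  exact: measurable_funS mf.
- by move=> k x _; rewrite /patch; case: ifP.
Qed.

End integ.

Local Open Scope classical_set_scope.
Local Open Scope ring_scope.

Section main.
Variable R : realType.
Variables d : nat.
Variable mu : {measure set (d.-tuple R) -> \bar R}.
Variable K : d.-tuple R -> d.-tuple R -> R.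
Hypothesis hL : is_lebesgue mu.
Hypothesis hK : transition_density mu K.

Lemma K0 x y : 0 <= K x y. Proof. by case: hK. Qed.
Lemma mK : measurable_fun setT (fun p : d.-tuple R * d.-tuple R => K p.1 p.2).
Proof. by case: hK. Qed.
Lemma K1 x : (\int[mu]_y (K x y)%:E = 1)%E. Proof. by case: hK. Qed.

Lemma mKx x : measurable_fun setT (fun y => (K x y)%:E).
Proof.
apply/measurable_EFinP.
exact: (measurableT_comp mK (pair1_measurable x)).
Qed.

Lemma g_meas N (j : state d N) :
  measurable_fun setT (fun x => \int[mu]_(y in @bin R d N j) (K x y)%:E)%E.
Proof.
have H := leb_sigma hL.
have mB := @bin_meas R d N j.
pose f := fun p : d.-tuple R * d.-tuple R => (K p.1 p.2 * \1_(@bin R d N j) p.2)%:E.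
have mf : measurable_fun setT f.
  apply/measurable_EFinP; apply: measurable_funM; first exact: mK.
  by apply: measurableT_comp; [exact: measurable_indic|exact: measurable_snd].
have f0 : forall p, (0 <= f p)%E.
  by move=> p; rewrite /f lee_fin mulr_ge0 // ?K0 // indicE ler0n.
have := @measurable_fun_fubini_tonelli_F _ _ _ _ R (muS H) f mf f0.
congr measurable_fun; apply/funext => x.
rewrite /fubini_F [in RHS]integral_mkcond; apply: (@eq_integral _ _ _ mu) => y _.
by rewrite /f /patch indicE /=; case: ifP => _; rewrite ?mulr1 ?mulr0.
Qed.


Lemma g_ge0 N (j : state d N) x : (0 <= \int[mu]_(y in @bin R d N j) (K x y)%:E)%E.
Proof. by apply: integral_ge0 => y _; rewrite lee_fin K0. Qed.

Lemma g_le1 N (j : state d N) x : (\int[mu]_(y in @bin R d N j) (K x y)%:E <= 1)%E.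
Proof.
rewrite -(K1 x); apply: ge0_subset_integral => //; first exact: bin_meas.
- exact: mKx.
- by move=> y _; rewrite lee_fin K0.
Qed.

Lemma I_fin N (k k' : state d N) :
  (\int[mu]_(x in @bin R d N k) \int[mu]_(y in @bin R d N k') (K x y)%:E)%E \is a fin_num.
Proof.
rewrite ge0_fin_numE; last by apply: integral_ge0 => x _; exact: g_ge0.
apply: (@le_lt_trans _ _ (\int[mu]_(x in @bin R d N k) cst 1%E x)%E).
  apply: ge0_le_integral => //; first exact: bin_meas.
  - by move=> x _; exact: g_ge0.
  - exact: measurable_funS (g_meas k').
  - by move=> x _; exact: g_le1.
rewrite integral_cst ?mul1e; last exact: bin_meas.
apply: box_fin => // i.
apply: ler_wpM2r; first by rewrite invr_ge0 ler0n.
by rewrite ler_int lerDl.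
Qed.


Lemma part3 M (hM : (0 < M)%N) (c c' : state d M) :
  ulam mu K c c' =
  \sum_(k : state d M.*2) \sum_(k' : state d M.*2)
     @avg_mx R d M c k * ulam mu K k k' * @interp_mx R d M k' c'.
Proof.
pose I k k' := (\int[mu]_(x in @bin R d M.*2 k) \int[mu]_(y in @bin R d M.*2 k') (K x y)%:E)%E.
have e1 : forall x, (\int[mu]_(y in @bin R d M c') (K x y)%:E =
    \sum_(k' | in_coarse k' c') \int[mu]_(y in @bin R d M.*2 k') (K x y)%:E)%E.
  move=> x; apply: split_int => //; first exact: mKx.
  by move=> y; rewrite lee_fin K0.
have e2 : (\int[mu]_(x in @bin R d M c) \int[mu]_(y in @bin R d M c') (K x y)%:E =
    \sum_(k' | in_coarse k' c') \sum_(k | in_coarse k c) I k k')%E.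
  under eq_integral => x _ do rewrite e1.
  rewrite int_sum_fin //; first last.
  - by move=> k' x _; exact: g_ge0.
  - by move=> k'; exact: measurable_funS (g_meas k').
  - exact: bin_meas.
  apply: eq_bigr => k' _; apply: split_int => //; first exact: g_meas.
  by move=> x; exact: g_ge0.
rewrite /ulam e2 -sum_fine; last first.
  by move=> k' _; apply/sum_fin_numP => k _ _; exact: I_fin.
rewrite (eq_bigr (fun k' => \sum_(k | in_coarse k c) fine (I k k'))); last first.
  by move=> k' _; rewrite -sum_fine // => k _; exact: I_fin.
rewrite [LHS]exchange_big /= [LHS]big_mkcond /=; apply: eq_bigr => k _.
rewrite /avg_mx; case: (in_coarse k c) => /=.
  rewrite [LHS]big_mkcond /=; apply: eq_bigr => k' _.
  by rewrite /interp_mx; case: (in_coarse k' c') => /=; rewrite ?mulr1n ?mulr0n ?mul1r ?mulr1 ?mulr0.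
by rewrite big1 // => k' _; rewrite mulr0n !mul0r.
Qed.

End main.

Unset Implicit Arguments. Set Strict Implicit.
Local Close Scope classical_set_scope.
Local Open Scope ring_scope.

Theorem lemma2 (R : realType) (d M : nat) (hM : (0 < M)%N) :
  (forall (v : state d M.*2 -> R) (w : state d M -> R),
      inner v (interp w) = inner (avg v) w)
  /\ (forall w : state d M -> R, avg (interp w) = (fun c => (2 ^ d)%:R * w c))
  /\ (forall (mu : {measure set (d.-tuple R) -> \bar R})
             (K : d.-tuple R -> d.-tuple R -> R),
        is_lebesgue mu -> transition_density mu K ->
        forall c c' : state d M,
          ulam mu K c c' =
          \sum_(k : state d M.*2) \sum_(k' : state d M.*2)
             @avg_mx R d M c k * ulam mu K k k' * @interp_mx R d M k' c').
Proof.
split; first by move=> v w; exact: part1.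
split; first by move=> w; exact: part2.
by move=> mu K hL hK c c'; exact: part3.
Qed.
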